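(* Let $(A,\to,1)$ be an algebra of type $(2,0)$ satisfying (Re), (M) and (Ex). Then the properties (B), (BB) and ( * ) are pairwise equivalent for $(A,\to,1)$.
   Context: Properties, required for all $x,y,z\in A$: (Re) $x\to x=1$; (M) $1\to x=x$; (Ex) $x\to(y\to z)=y\to(x\to z)$; (B) $(y\to z)\to((x\to y)\to(x\to z))=1$; (BB) $(y\to z)\to((z\to x)\to(y\to x))=1$; ( * ) $y\to z=1$ implies $(x\to y)\to(x\to z)=1$. *)

(* Defs.v *)
Definition prop_Re {A : Type} (imp : A -> A -> A) (one : A) : Prop :=
  forall x : A, imp x x = one.

Definition prop_M {A : Type} (imp : A -> A -> A) (one : A) : Prop :=
  forall x : A, imp one x = x.

Definition prop_Ex {A : Type} (imp : A -> A -> A) (one : A) : Prop :=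
  forall x y z : A, imp x (imp y z) = imp y (imp x z).

Definition prop_B {A : Type} (imp : A -> A -> A) (one : A) : Prop :=
  forall x y z : A, imp (imp y z) (imp (imp x y) (imp x z)) = one.

Definition prop_BB {A : Type} (imp : A -> A -> A) (one : A) : Prop :=
  forall x y z : A, imp (imp y z) (imp (imp z x) (imp y x)) = one.

Definition prop_star {A : Type} (imp : A -> A -> A) (one : A) : Prop :=
  forall x y z : A, imp y z = one -> imp (imp x y) (imp x z) = one.

(* Main.v *)
Require Import Defs.

Theorem theorem2p2 (A : Type) (imp : A -> A -> A) (one : A) :
  prop_Re imp one -> prop_M imp one -> prop_Ex imp one ->
  (prop_B imp one <-> prop_BB imp one) /\
  (prop_BB imp one <-> prop_star imp one) /\
  (prop_B imp one <-> prop_star imp one).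
Proof.
  intros Re M Ex.
  assert (BBB : prop_B imp one <-> prop_BB imp one).
  { unfold prop_B, prop_BB; split; intros H x y z.
    - rewrite Ex. apply H.
    - rewrite Ex. apply H. }
  assert (BS : prop_B imp one <-> prop_star imp one).
  { unfold prop_B, prop_star; split.
    - intros H x y z Hyz. rewrite <- (H x y z), Hyz, M. reflexivity.
    - intros H x y z. rewrite Ex.
      assert (K : imp y (imp (imp y z) z) = one) by (rewrite Ex; apply Re).
      pose proof (H x y (imp (imp y z) z) K) as K2.
      rewrite (Ex x (imp y z) z) in K2. exact K2. }
  split; [exact BBB|split; [|exact BS]].
  split; intro H; [apply BS, BBB, H | apply BBB, BS, H].
Qed.
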